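(* Let $\varphi\in\mathfrak{sl}(2,\mathbb C)$ and consider the linear map $M_\varphi:i\mathfrak{su}(2)\to i\mathfrak{su}(2)$, $M_\varphi\gamma=[\varphi^*,[\varphi,\gamma]]+[\varphi,[\varphi^*,\gamma]]$. Then $M_\varphi$ is invertible if and only if $[\varphi,\varphi^*]\neq0$, i.e. if and only if $\varphi$ is not normal. If $[\varphi,\varphi^*]=0$ for some $0\ne\varphi\in\mathfrak{sl}(2,\mathbb C)$, then $M_\varphi$ has a one-dimensional kernel.
   Context: $i\mathfrak{su}(2)$ denotes the hermitian trace-free $2\times2$ complex matrices, and $\varphi^*$ is the conjugate transpose of $\varphi$. *)

(* Defs.v *)
(* Complex numbers are R[i] for a real closed field R
   (R = the reals gives C). *)
From HB Require Import structures.
From mathcomp Require Import all_boot all_order all_algebra.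
From mathcomp Require Import complex.
Set Implicit Arguments. Unset Strict Implicit. Unset Printing Implicit Defensive.
Import Order.TTheory GRing.Theory Num.Theory.
Local Open Scope ring_scope.

Definition adjmx (R : rcfType) (A : 'M[R[i]]_2) : 'M[R[i]]_2 :=
  map_mx (@conjc R) A^T.

Definition comm_br (R : rcfType) (A B : 'M[R[i]]_2) : 'M[R[i]]_2 :=
  A *m B - B *m A.

Definition in_sl2 (R : rcfType) (A : 'M[R[i]]_2) : Prop := \tr A = 0.

Definition in_isu2 (R : rcfType) (A : 'M[R[i]]_2) : Prop :=
  adjmx A = A /\ \tr A = 0.

Definition Mphi (R : rcfType) (phi gamma : 'M[R[i]]_2) : 'M[R[i]]_2 :=
  comm_br (adjmx phi) (comm_br phi gamma) + comm_br phi (comm_br (adjmx phi) gamma).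

Definition invertible_on_isu2 (R : rcfType) (f : 'M[R[i]]_2 -> 'M[R[i]]_2) : Prop :=
  (forall g, in_isu2 g -> in_isu2 (f g)) /\
  (forall g1 g2, in_isu2 g1 -> in_isu2 g2 -> f g1 = f g2 -> g1 = g2) /\
  (forall d, in_isu2 d -> exists2 g, in_isu2 g & f g = d).

(* the kernel of f restricted to i su(2) (a real vector space) is
   one-dimensional over R: spanned by a single nonzero element *)
Definition one_dim_kernel_isu2 (R : rcfType) (f : 'M[R[i]]_2 -> 'M[R[i]]_2) : Prop :=
  exists g0, [/\ in_isu2 g0, g0 != 0, f g0 = 0 &
    forall g, in_isu2 g -> f g = 0 -> exists r : R, g = (r%:C)%C *: g0].

(* Main.v *)
Require Import Defs.
From HB Require Import structures.
From mathcomp Require Import all_boot all_order all_algebra.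
From mathcomp Require Import complex.
From mathcomp Require Import ring lra.
From Stdlib Require Import Classical.
Import Order.TTheory GRing.Theory Num.Theory.
Local Open Scope ring_scope.

Section Real.
Variable R : rcfType.
Variables u1 u2 u3 v1 v2 v3 : R.

Lemma sos3 (a b c : R) : a^+2+b^+2+c^+2 = 0 -> a = 0 /\ b = 0 /\ c = 0.
Proof. move=> h. split; [|split]; nra. Qed.

Definition ss := u1*u1+u2*u2+u3*u3 + (v1*v1+v2*v2+v3*v3).
Definition ugf (g1 g2 g3 : R) := u1*g1+u2*g2+u3*g3.
Definition vgf (g1 g2 g3 : R) := v1*g1+v2*g2+v3*g3.
Definition Ta g1 g2 g3 := ss*g1 - u1*ugf g1 g2 g3 - v1*vgf g1 g2 g3.
Definition Tb g1 g2 g3 := ss*g2 - u2*ugf g1 g2 g3 - v2*vgf g1 g2 g3.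
Definition Tc g1 g2 g3 := ss*g3 - u3*ugf g1 g2 g3 - v3*vgf g1 g2 g3.
Definition w1 := u2*v3 - u3*v2.
Definition w2 := u3*v1 - u1*v3.
Definition w3 := u1*v2 - u2*v1.

Lemma ker_cross g1 g2 g3 : Ta g1 g2 g3 = 0 -> Tb g1 g2 g3 = 0 -> Tc g1 g2 g3 = 0 ->
  (u2*g3 - u3*g2 = 0 /\ u3*g1 - u1*g3 = 0 /\ u1*g2 - u2*g1 = 0) /\
  (v2*g3 - v3*g2 = 0 /\ v3*g1 - v1*g3 = 0 /\ v1*g2 - v2*g1 = 0).
Proof.
move=> ha hb hc.
have E : ((u2*g3 - u3*g2)^+2 + (u3*g1 - u1*g3)^+2 + (u1*g2 - u2*g1)^+2) +
  ((v2*g3 - v3*g2)^+2 + (v3*g1 - v1*g3)^+2 + (v1*g2 - v2*g1)^+2) =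
  g1 * Ta g1 g2 g3 + g2 * Tb g1 g2 g3 + g3 * Tc g1 g2 g3.
  rewrite /Ta /Tb /Tc /ss /ugf /vgf; ring.
rewrite ha hb hc !mulr0 !addr0 in E.
set A := (u2*g3 - u3*g2)^+2 + (u3*g1 - u1*g3)^+2 + (u1*g2 - u2*g1)^+2 in E *.
set B := (v2*g3 - v3*g2)^+2 + (v3*g1 - v1*g3)^+2 + (v1*g2 - v2*g1)^+2 in E *.
have hA : 0 <= A by rewrite /A !addr_ge0 // sqr_ge0.
have hB : 0 <= B by rewrite /B !addr_ge0 // sqr_ge0.
have h1 : A = 0 by lra.
have h2 : B = 0 by lra.
by split; apply: sos3.
Qed.

Lemma par (x1 x2 x3 g1 g2 g3 : R) :
  x2*g3 - x3*g2 = 0 -> x3*g1 - x1*g3 = 0 -> x1*g2 - x2*g1 = 0 ->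
  let N := g1^+2+g2^+2+g3^+2 in let d := x1*g1+x2*g2+x3*g3 in
  [/\ N*x1 = d*g1, N*x2 = d*g2 & N*x3 = d*g3].
Proof.
move=> c1 c2 c3 N d; split; apply/eqP; rewrite -subr_eq0; apply/eqP.
- transitivity (g2*(x1*g2-x2*g1) - g3*(x3*g1-x1*g3)); first (rewrite /N /d; ring).
  by rewrite c2 c3 !mulr0 subr0.
- transitivity (g3*(x2*g3-x3*g2) - g1*(x1*g2-x2*g1)); first (rewrite /N /d; ring).
  by rewrite c1 c3 !mulr0 subr0.
- transitivity (g1*(x3*g1-x1*g3) - g2*(x2*g3-x3*g2)); first (rewrite /N /d; ring).
  by rewrite c1 c2 !mulr0 subr0.
Qed.

Lemma inj0 g1 g2 g3 : ~ (w1 = 0 /\ w2 = 0 /\ w3 = 0) ->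
  Ta g1 g2 g3 = 0 -> Tb g1 g2 g3 = 0 -> Tc g1 g2 g3 = 0 -> g1 = 0 /\ g2 = 0 /\ g3 = 0.
Proof.
move=> hw ha hb hc.
have [[c1 [c2 c3]] [d1 [d2 d3]]] := ker_cross _ _ _ ha hb hc.
have [pu1 pu2 pu3] := par _ _ _ _ _ _ c1 c2 c3.
have [pv1 pv2 pv3] := par _ _ _ _ _ _ d1 d2 d3.
set N := g1^+2+g2^+2+g3^+2.
have hN : N = 0.
  apply/eqP; apply: contraT => nN. case: hw.
  have nN2 : N * N != 0 by rewrite mulf_neq0.
  have e1 : (N*N) * w1 = (N*u2)*(N*v3) - (N*u3)*(N*v2) by rewrite /w1; ring.
  have e2 : (N*N) * w2 = (N*u3)*(N*v1) - (N*u1)*(N*v3) by rewrite /w2; ring.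
  have e3 : (N*N) * w3 = (N*u1)*(N*v2) - (N*u2)*(N*v1) by rewrite /w3; ring.
  rewrite /N pu1 pu2 pu3 pv1 pv2 pv3 -/N in e1 e2 e3.
  split; [|split]; apply: (mulfI nN2).
  + by rewrite e1 mulr0; ring.
  + by rewrite e2 mulr0; ring.
  + by rewrite e3 mulr0; ring.
by apply: sos3.
Qed.

Lemma Tu : w1 = 0 -> w2 = 0 -> w3 = 0 ->
  [/\ Ta u1 u2 u3 = 0, Tb u1 u2 u3 = 0 & Tc u1 u2 u3 = 0].
Proof.
move=> h1 h2 h3; split.
- transitivity (v2*w3 - v3*w2); first by rewrite /Ta /ss /ugf /vgf /w2 /w3; ring.
  by rewrite h2 h3; ring.
- transitivity (v3*w1 - v1*w3); first by rewrite /Tb /ss /ugf /vgf /w1 /w3; ring.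
  by rewrite h1 h3; ring.
- transitivity (v1*w2 - v2*w1); first by rewrite /Tc /ss /ugf /vgf /w1 /w2; ring.
  by rewrite h1 h2; ring.
Qed.

Lemma Tv : w1 = 0 -> w2 = 0 -> w3 = 0 ->
  [/\ Ta v1 v2 v3 = 0, Tb v1 v2 v3 = 0 & Tc v1 v2 v3 = 0].
Proof.
move=> h1 h2 h3; split.
- transitivity (u3*w2 - u2*w3); first by rewrite /Ta /ss /ugf /vgf /w2 /w3; ring.
  by rewrite h2 h3; ring.
- transitivity (u1*w3 - u3*w1); first by rewrite /Tb /ss /ugf /vgf /w1 /w3; ring.
  by rewrite h1 h3; ring.
- transitivity (u2*w1 - u1*w2); first by rewrite /Tc /ss /ugf /vgf /w1 /w2; ring.
  by rewrite h1 h2; ring.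
Qed.

Lemma surj_id y1 y2 y3 :
  let uy := ugf y1 y2 y3 in let vy := vgf y1 y2 y3 in let wy := w1*y1+w2*y2+w3*y3 in
  let z1 := ss*(u1*uy + v1*vy) + w1*wy in
  let z2 := ss*(u2*uy + v2*vy) + w2*wy in
  let z3 := ss*(u3*uy + v3*vy) + w3*wy in
  let D := ss * (w1^+2+w2^+2+w3^+2) in
  [/\ Ta z1 z2 z3 = D * y1, Tb z1 z2 z3 = D * y2 & Tc z1 z2 z3 = D * y3].
Proof.
move=> uy vy wy z1 z2 z3 D; rewrite /z1 /z2 /z3 /D /uy /vy /wy /Ta /Tb /Tc /ugf /vgf /ss /w1 /w2 /w3.
split; ring.
Qed.

Lemma T_scale c g1 g2 g3 :
  [/\ Ta (c*g1) (c*g2) (c*g3) = c * Ta g1 g2 g3, Tb (c*g1) (c*g2) (c*g3) = c * Tb g1 g2 g3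
   & Tc (c*g1) (c*g2) (c*g3) = c * Tc g1 g2 g3].
Proof. rewrite /Ta /Tb /Tc /ugf /vgf; split; ring. Qed.

Lemma T_sub g1 g2 g3 h1 h2 h3 :
  [/\ Ta (g1-h1) (g2-h2) (g3-h3) = Ta g1 g2 g3 - Ta h1 h2 h3,
      Tb (g1-h1) (g2-h2) (g3-h3) = Tb g1 g2 g3 - Tb h1 h2 h3
   & Tc (g1-h1) (g2-h2) (g3-h3) = Tc g1 g2 g3 - Tc h1 h2 h3].
Proof. rewrite /Ta /Tb /Tc /ugf /vgf; split; ring. Qed.

Definition wy y1 y2 y3 := w1*y1+w2*y2+w3*y3.
Definition zf1 y1 y2 y3 := ss*(u1*ugf y1 y2 y3 + v1*vgf y1 y2 y3) + w1*wy y1 y2 y3.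
Definition zf2 y1 y2 y3 := ss*(u2*ugf y1 y2 y3 + v2*vgf y1 y2 y3) + w2*wy y1 y2 y3.
Definition zf3 y1 y2 y3 := ss*(u3*ugf y1 y2 y3 + v3*vgf y1 y2 y3) + w3*wy y1 y2 y3.
Definition Dd := ss * (w1^+2+w2^+2+w3^+2).

Lemma surj_id2 y1 y2 y3 :
  [/\ Ta (zf1 y1 y2 y3) (zf2 y1 y2 y3) (zf3 y1 y2 y3) = Dd * y1,
      Tb (zf1 y1 y2 y3) (zf2 y1 y2 y3) (zf3 y1 y2 y3) = Dd * y2 &
      Tc (zf1 y1 y2 y3) (zf2 y1 y2 y3) (zf3 y1 y2 y3) = Dd * y3].
Proof. exact: surj_id. Qed.

Lemma Dd_neq0 : ~ (w1 = 0 /\ w2 = 0 /\ w3 = 0) -> Dd != 0.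
Proof.
move=> hw; rewrite /Dd mulf_neq0 //.
- apply/eqP => h0; apply: hw.
  have hu : u1^+2+u2^+2+u3^+2 = 0.
    have h1 : 0 <= u1^+2+u2^+2+u3^+2 by rewrite !addr_ge0 // sqr_ge0.
    have h2 : 0 <= v1^+2+v2^+2+v3^+2 by rewrite !addr_ge0 // sqr_ge0.
    move: h0; rewrite /ss -!expr2 => h0; lra.
  have [e1 [e2 e3]] := sos3 _ _ _ hu.
  by rewrite /w1 /w2 /w3 e1 e2 e3 !mul0r subr0.
- apply/eqP => h0; apply: hw; exact: sos3.
Qed.

End Real.
Arguments ss {R}. Arguments ugf {R}. Arguments vgf {R}. Arguments Ta {R}. Arguments Tb {R}. Arguments Tc {R}.
Arguments w1 {R}. Arguments sos3 {R a b c}. Arguments zf1 {R}. Arguments zf2 {R}. Arguments zf3 {R}. Arguments Dd {R}. Arguments Dd_neq0 {R u1 u2 u3 v1 v2 v3}. Arguments wy {R}. Arguments w2 {R}. Arguments w3 {R}.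
Arguments ker_cross {R u1 u2 u3 v1 v2 v3 g1 g2 g3}.
Arguments par {R x1 x2 x3 g1 g2 g3}.
Arguments inj0 {R u1 u2 u3 v1 v2 v3 g1 g2 g3}.
Arguments Tu {R u1 u2 u3 v1 v2 v3}.
Arguments Tv {R u1 u2 u3 v1 v2 v3}.

Section S.
Variable R : rcfType.
Local Notation C := R[i].

Definition M2 (a b c d : C) : 'M[C]_2 :=
  \matrix_(i<2,j<2) if i == 0 then (if j == 0 then a else b) else (if j == 0 then c else d).

Lemma M2E (A : 'M[C]_2) : A = M2 (A 0 0) (A 0 1) (A 1 0) (A 1 1).
Proof. apply/matrixP=> i j; rewrite !mxE. case: i => [[|[|//]] ?]; case: j => [[|[|//]] ?];
  by congr (A _ _); apply: val_inj. Qed.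

Lemma M2_mul a b c d a' b' c' d' : M2 a b c d *m M2 a' b' c' d' =
  M2 (a*a'+b*c') (a*b'+b*d') (c*a'+d*c') (c*b'+d*d').
Proof. apply/matrixP=> i j; rewrite !mxE !big_ord_recr big_ord0 /= !mxE add0r.
case: i => [[|[|//]] ?]; case: j => [[|[|//]] ?] //. Qed.

Lemma M2_add a b c d a' b' c' d' : M2 a b c d + M2 a' b' c' d' = M2 (a+a') (b+b') (c+c') (d+d').
Proof. apply/matrixP=> i j; rewrite !mxE.
case: i => [[|[|//]] ?]; case: j => [[|[|//]] ?] //. Qed.

Lemma M2_opp a b c d : - M2 a b c d = M2 (-a) (-b) (-c) (-d).
Proof. apply/matrixP=> i j; rewrite !mxE.
case: i => [[|[|//]] ?]; case: j => [[|[|//]] ?] //. Qed.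

Lemma M2_adj a b c d : adjmx (M2 a b c d) = M2 (conjc a) (conjc c) (conjc b) (conjc d).
Proof. apply/matrixP=> i j; rewrite !mxE.
case: i => [[|[|//]] ?]; case: j => [[|[|//]] ?] //. Qed.

Lemma M2_tr a b c d : \tr (M2 a b c d) = a + d.
Proof. by rewrite /mxtrace !big_ord_recr big_ord0 /= !mxE add0r. Qed.

Lemma M2_eq a b c d a' b' c' d' : a = a' -> b = b' -> c = c' -> d = d' -> M2 a b c d = M2 a' b' c' d'.
Proof. by move=> -> -> -> ->. Qed.

Definition mk (g1 g2 g3 : R) : 'M[C]_2 :=
  M2 (Complex g3 0) (Complex g1 (-g2)) (Complex g1 g2) (Complex (-g3) 0).
Definition mkphi (u1 u2 u3 v1 v2 v3 : R) : 'M[C]_2 :=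
  M2 (Complex u3 v3) (Complex (u1+v2) (v1-u2)) (Complex (u1-v2) (v1+u2)) (Complex (-u3) (-v3)).


Lemma ReD (x y : C) : complex.Re (x + y) = complex.Re x + complex.Re y. Proof. case: x => ? ?; case: y => ? ?; reflexivity. Qed.
Lemma ImD (x y : C) : complex.Im (x + y) = complex.Im x + complex.Im y. Proof. case: x => ? ?; case: y => ? ?; reflexivity. Qed.
Lemma ReN (x : C) : complex.Re (- x) = - complex.Re x. Proof. case: x => ? ?; reflexivity. Qed.
Lemma ImN (x : C) : complex.Im (- x) = - complex.Im x. Proof. case: x => ? ?; reflexivity. Qed.
Lemma ReM (x y : C) : complex.Re (x * y) = complex.Re x * complex.Re y - complex.Im x * complex.Im y. Proof. case: x => ? ?; case: y => ? ?; reflexivity. Qed.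
Lemma ImM (x y : C) : complex.Im (x * y) = complex.Re x * complex.Im y + complex.Im x * complex.Re y. Proof. case: x => ? ?; case: y => ? ?; reflexivity. Qed.
Lemma ReJ (x : C) : complex.Re (conjc x) = complex.Re x. Proof. case: x => ? ?; reflexivity. Qed.
Lemma ImJ (x : C) : complex.Im (conjc x) = - complex.Im x. Proof. case: x => ? ?; reflexivity. Qed.
Lemma ceq (x y : C) : complex.Re x = complex.Re y -> complex.Im x = complex.Im y -> x = y.
Proof. by case: x; case: y => ? ? ? ? /= -> ->. Qed.

Lemma cM (a b c d : R) : (Complex a b : C) * Complex c d = Complex (a*c - b*d) (a*d + b*c). Proof. reflexivity. Qed.
Lemma cD (a b c d : R) : (Complex a b : C) + Complex c d = Complex (a+c) (b+d). Proof. reflexivity. Qed.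
Lemma cN (a b : R) : - (Complex a b : C) = Complex (-a) (-b). Proof. reflexivity. Qed.
Lemma cJ (a b : R) : conjc (Complex a b : C) = Complex a (-b). Proof. reflexivity. Qed.
Ltac cx2 := rewrite /mk /mkphi /Mphi /comm_br !(M2_adj, M2_mul, M2_opp, M2_add);
  apply: M2_eq; rewrite !(cM, cD, cN, cJ); congr Complex; ring.
Ltac cx := rewrite /mk /mkphi /Mphi /comm_br !(M2_adj, M2_mul, M2_opp, M2_add);
  apply: M2_eq; apply: ceq; time (rewrite !(ReD, ImD, ReN, ImN, ReM, ImM, ReJ, ImJ) /=); ring.


Lemma comm_phi u1 u2 u3 v1 v2 v3 :
  comm_br (mkphi u1 u2 u3 v1 v2 v3) (adjmx (mkphi u1 u2 u3 v1 v2 v3)) =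
  mk (4 * w1 u2 u3 v2 v3) (4 * w2 u1 u3 v1 v3) (4 * w3 u1 u2 v1 v2).
Proof. rewrite /w1 /w2 /w3. cx2. Qed.

Lemma Mphi_mk u1 u2 u3 v1 v2 v3 g1 g2 g3 :
  Mphi (mkphi u1 u2 u3 v1 v2 v3) (mk g1 g2 g3) =
  mk (8 * Ta u1 u2 u3 v1 v2 v3 g1 g2 g3) (8 * Tb u1 u2 u3 v1 v2 v3 g1 g2 g3)
     (8 * Tc u1 u2 u3 v1 v2 v3 g1 g2 g3).
Proof. rewrite /Ta /Tb /Tc /ss /ugf /vgf. cx2. Qed.

Lemma M2_inj a b c d a' b' c' d' : M2 a b c d = M2 a' b' c' d' ->
  [/\ a = a', b = b', c = c' & d = d'].
Proof.
move=> E; split.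
- by have := congr1 (fun M : 'M[C]_2 => M 0 0) E; rewrite !mxE.
- by have := congr1 (fun M : 'M[C]_2 => M 0 1) E; rewrite !mxE.
- by have := congr1 (fun M : 'M[C]_2 => M 1 0) E; rewrite !mxE.
- by have := congr1 (fun M : 'M[C]_2 => M 1 1) E; rewrite !mxE.
Qed.

Lemma M2_0 : M2 0 0 0 0 = 0.
Proof. apply/matrixP=> i j; rewrite !mxE.
case: i => [[|[|//]] ?]; case: j => [[|[|//]] ?] //. Qed.

Lemma M2_scale (k a b c d : C) : k *: M2 a b c d = M2 (k*a) (k*b) (k*c) (k*d).
Proof. apply/matrixP=> i j; rewrite !mxE.
case: i => [[|[|//]] ?]; case: j => [[|[|//]] ?] //. Qed.

Lemma mk0 : mk 0 0 0 = 0.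
Proof. rewrite /mk -M2_0; apply: M2_eq; apply: ceq => //=; by rewrite ?oppr0. Qed.

Lemma mk_inj a b c a' b' c' : mk a b c = mk a' b' c' -> [/\ a = a', b = b' & c = c'].
Proof.
case/M2_inj => e1 e2 e3 _. case: e1 => ->. case: e3 => -> ->. by [].
Qed.

Lemma mk_eq0 a b c : mk a b c = 0 -> [/\ a = 0, b = 0 & c = 0].
Proof. rewrite -mk0; exact: mk_inj. Qed.

Lemma mkZ r a b c : mk (r*a) (r*b) (r*c) = (Complex r 0) *: mk a b c.
Proof. rewrite /mk M2_scale; apply: M2_eq; rewrite cM; congr Complex; ring. Qed.

Lemma isu2_mk a b c : in_isu2 (mk a b c).
Proof.
split; last by rewrite /mk M2_tr cD; apply: ceq => /=; ring.
rewrite /mk M2_adj; apply: M2_eq; rewrite cJ; congr Complex; ring.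
Qed.

Lemma imJ0 (x : C) : conjc x = x -> complex.Im x = 0.
Proof. move=> h; have := congr1 (@complex.Im R) h; rewrite ImJ => e; lra. Qed.

Lemma isu2_ex G : in_isu2 G -> exists a b c, G = mk a b c.
Proof.
case=> hA hT. rewrite (M2E G) in hA hT *.
move: (G 0 0) (G 0 1) (G 1 0) (G 1 1) hA hT => a b c d hA hT.
rewrite M2_adj in hA. rewrite M2_tr in hT.
case/M2_inj: hA => ea eb _ _.
have hd : d = - a by apply/eqP; rewrite -addr_eq0 addrC hT.
exists (complex.Re c), (complex.Im c), (complex.Re a).
rewrite /mk hd -eb; apply: M2_eq; apply: ceq; rewrite ?ReJ ?ImJ ?ReN ?ImN //=.
- exact: imJ0.
- by rewrite (imJ0 _ ea) oppr0.
Qed.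

Lemma decomp (phi : 'M[C]_2) : in_sl2 phi ->
  phi = mkphi ((complex.Re (phi 0 1) + complex.Re (phi 1 0)) / 2)
              ((complex.Im (phi 1 0) - complex.Im (phi 0 1)) / 2) (complex.Re (phi 0 0))
              ((complex.Im (phi 0 1) + complex.Im (phi 1 0)) / 2)
              ((complex.Re (phi 0 1) - complex.Re (phi 1 0)) / 2) (complex.Im (phi 0 0)).
Proof.
rewrite /in_sl2 => hT. rewrite {1}(M2E phi). rewrite (M2E phi) M2_tr in hT.
move: (phi 0 0) (phi 0 1) (phi 1 0) (phi 1 1) hT => a b c d hT.
have hd : d = - a by apply/eqP; rewrite -addr_eq0 addrC hT.
rewrite hd /mkphi; apply: M2_eq.
- by case: (a).
- by case: (b) => p1 q1; case: (c) => p2 q2 /=; congr Complex; field.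
- by case: (b) => p1 q1; case: (c) => p2 q2 /=; congr Complex; field.
- by case: (a) => p q.
Qed.

Lemma mkphi0 : mkphi 0 0 0 0 0 0 = 0.
Proof. rewrite /mkphi -M2_0; apply: M2_eq; apply: ceq => /=; ring. Qed.

Lemma main u1 u2 u3 v1 v2 v3 :
  (invertible_on_isu2 (Mphi (mkphi u1 u2 u3 v1 v2 v3)) <->
     comm_br (mkphi u1 u2 u3 v1 v2 v3) (adjmx (mkphi u1 u2 u3 v1 v2 v3)) != 0) /\
  (mkphi u1 u2 u3 v1 v2 v3 != 0 ->
     comm_br (mkphi u1 u2 u3 v1 v2 v3) (adjmx (mkphi u1 u2 u3 v1 v2 v3)) = 0 ->
     one_dim_kernel_isu2 (Mphi (mkphi u1 u2 u3 v1 v2 v3))).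
Proof.
rewrite comm_phi.
set W1 := w1 u2 u3 v2 v3; set W2 := w2 u1 u3 v1 v3; set W3 := w3 u1 u2 v1 v2.
have hW : (mk (4*W1) (4*W2) (4*W3) != 0) <-> ~ (W1 = 0 /\ W2 = 0 /\ W3 = 0).
  split.
  - move=> /eqP h [e1 [e2 e3]]; apply: h; by rewrite e1 e2 e3 !mulr0 mk0.
  - move=> h; apply/eqP => /mk_eq0 [e1 e2 e3]; apply: h; split; [|split]; lra.
set phi := mkphi u1 u2 u3 v1 v2 v3.
have ker0 : forall g1 g2 g3, Ta u1 u2 u3 v1 v2 v3 g1 g2 g3 = 0 ->
    Tb u1 u2 u3 v1 v2 v3 g1 g2 g3 = 0 -> Tc u1 u2 u3 v1 v2 v3 g1 g2 g3 = 0 ->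
    Mphi phi (mk g1 g2 g3) = 0.
  by move=> g1 g2 g3 ha hb hc; rewrite /phi Mphi_mk ha hb hc !mulr0 mk0.
have kerT : forall g1 g2 g3, Mphi phi (mk g1 g2 g3) = 0 ->
    [/\ Ta u1 u2 u3 v1 v2 v3 g1 g2 g3 = 0,
    Tb u1 u2 u3 v1 v2 v3 g1 g2 g3 = 0 & Tc u1 u2 u3 v1 v2 v3 g1 g2 g3 = 0].
  by move=> g1 g2 g3; rewrite /phi Mphi_mk => /mk_eq0 [e1 e2 e3]; split; lra.
have M0 : Mphi phi 0 = 0.
  by rewrite -{1}mk0; apply: ker0; rewrite /Ta /Tb /Tc /ugf /vgf; ring.
have isu0 : in_isu2 (0 : 'M[C]_2) by rewrite -mk0; apply: isu2_mk.
split.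
- rewrite hW; split.
  + case=> _ [hinj _] hw.
    have [x1 [x2 [x3 [hx [h1 [h2 h3]]]]]] : exists x1 x2 x3, ~ (x1 = 0 /\ x2 = 0 /\ x3 = 0) /\
        (Ta u1 u2 u3 v1 v2 v3 x1 x2 x3 = 0 /\ Tb u1 u2 u3 v1 v2 v3 x1 x2 x3 = 0 /\
         Tc u1 u2 u3 v1 v2 v3 x1 x2 x3 = 0).
      case: hw => a [b c].
      case: (boolP ([&& u1 == 0, u2 == 0 & u3 == 0])) => [/and3P[/eqP e1 /eqP e2 /eqP e3]|hu].
      * case: (boolP ([&& v1 == 0, v2 == 0 & v3 == 0])) => [/and3P[/eqP f1 /eqP f2 /eqP f3]|hv].
        -- exists 1, 0, 0; split.
           ++ by case=> /eqP; rewrite oner_eq0.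
           ++ rewrite /Ta /Tb /Tc /ss /ugf /vgf e1 e2 e3 f1 f2 f3; split; [|split]; ring.
        -- exists v1, v2, v3; split.
           ++ by move=> [f1 [f2 f3]]; move: hv; rewrite f1 f2 f3 eqxx.
           ++ by have [t1 t2 t3] := Tv a b c.
      * exists u1, u2, u3; split.
        -- by move=> [f1 [f2 f3]]; move: hu; rewrite f1 f2 f3 eqxx.
        -- by have [t1 t2 t3] := Tu a b c.
    have := hinj (mk x1 x2 x3) 0 (isu2_mk _ _ _) isu0.
    rewrite M0 ker0 // => /(_ erefl) /mk_eq0 [e1 e2 e3]; by apply: hx.
  + move=> hw. split; [|split].
    * move=> g /isu2_ex [a [b [c ->]]]. rewrite Mphi_mk; apply: isu2_mk.
    * move=> g g' /isu2_ex [a [b [c ->]]] /isu2_ex [a' [b' [c' ->]]].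
      rewrite /phi !Mphi_mk => /mk_inj [e1 e2 e3].
      have [t1 t2 t3] := T_sub _ u1 u2 u3 v1 v2 v3 a b c a' b' c'.
      have q1 : Ta u1 u2 u3 v1 v2 v3 (a-a') (b-b') (c-c') = 0 by rewrite t1; lra.
      have q2 : Tb u1 u2 u3 v1 v2 v3 (a-a') (b-b') (c-c') = 0 by rewrite t2; lra.
      have q3 : Tc u1 u2 u3 v1 v2 v3 (a-a') (b-b') (c-c') = 0 by rewrite t3; lra.
      have [z1 [z2 z3]] := inj0 hw q1 q2 q3.
      have -> : a = a' by lra.
      have -> : b = b' by lra.
      by have -> : c = c' by lra.
    * move=> d /isu2_ex [y1 [y2 [y3 ->]]].
      have hD := Dd_neq0 hw.
      set k := (8 * Dd u1 u2 u3 v1 v2 v3)^-1.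
      exists (mk (k * zf1 u1 u2 u3 v1 v2 v3 y1 y2 y3) (k * zf2 u1 u2 u3 v1 v2 v3 y1 y2 y3)
                 (k * zf3 u1 u2 u3 v1 v2 v3 y1 y2 y3)); first exact: isu2_mk.
      have [c1 c2 c3] := T_scale _ u1 u2 u3 v1 v2 v3 k (zf1 u1 u2 u3 v1 v2 v3 y1 y2 y3)
          (zf2 u1 u2 u3 v1 v2 v3 y1 y2 y3) (zf3 u1 u2 u3 v1 v2 v3 y1 y2 y3).
      have [s1 s2 s3] := surj_id2 _ u1 u2 u3 v1 v2 v3 y1 y2 y3.
      rewrite /phi Mphi_mk c1 c2 c3 s1 s2 s3 /k.
      by congr mk; field; rewrite hD.
- move=> hphi hc.
  have hw : W1 = 0 /\ W2 = 0 /\ W3 = 0.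
    by apply: NNPP => h; move/hW: h; rewrite hc eqxx.
  have key : forall x1 x2 x3, ~ (x1 = 0 /\ x2 = 0 /\ x3 = 0) ->
      Ta u1 u2 u3 v1 v2 v3 x1 x2 x3 = 0 -> Tb u1 u2 u3 v1 v2 v3 x1 x2 x3 = 0 ->
      Tc u1 u2 u3 v1 v2 v3 x1 x2 x3 = 0 ->
      (forall h1 h2 h3, Ta u1 u2 u3 v1 v2 v3 h1 h2 h3 = 0 -> Tb u1 u2 u3 v1 v2 v3 h1 h2 h3 = 0 ->
          Tc u1 u2 u3 v1 v2 v3 h1 h2 h3 = 0 ->
          x2*h3 - x3*h2 = 0 /\ x3*h1 - x1*h3 = 0 /\ x1*h2 - x2*h1 = 0) ->
      one_dim_kernel_isu2 (Mphi phi).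
    move=> x1 x2 x3 hx ta tb tc hcr.
    exists (mk x1 x2 x3); split.
    * exact: isu2_mk.
    * by apply/eqP => /mk_eq0 [e1 e2 e3]; apply: hx.
    * exact: ker0.
    * move=> g /isu2_ex [h1 [h2 [h3 ->]]] /kerT [ka kb kc].
      have [c1 [c2 c3]] := hcr _ _ _ ka kb kc.
      have r1 : h2*x3 - h3*x2 = 0 by lra.
      have r2 : h3*x1 - h1*x3 = 0 by lra.
      have r3 : h1*x2 - h2*x1 = 0 by lra.
      have [p1 p2 p3] := par r1 r2 r3.
      set N := x1^+2+x2^+2+x3^+2 in p1 p2 p3.
      have hN : N != 0 by apply/eqP => /sos3.
      exists ((h1*x1+h2*x2+h3*x3) / N).
      rewrite -[(_ %:C)%C]/(Complex ((h1*x1+h2*x2+h3*x3) / N) 0) -mkZ.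
      congr mk; apply: (mulfI hN); rewrite ?p1 ?p2 ?p3; field; by rewrite hN.
  have [e1 [e2 e3]] := hw.
  case: (boolP ([&& u1 == 0, u2 == 0 & u3 == 0])) => [/and3P[/eqP f1 /eqP f2 /eqP f3]|hu].
  + have hv : ~ (v1 = 0 /\ v2 = 0 /\ v3 = 0).
      move=> [g1 [g2 g3]]; move: hphi; by rewrite /phi f1 f2 f3 g1 g2 g3 mkphi0 eqxx.
    have [t1 t2 t3] := Tv e1 e2 e3.
    apply: (key _ _ _ hv t1 t2 t3) => h1 h2 h3 ka kb kc.
    by have [_ ?] := ker_cross ka kb kc.
  + have hu' : ~ (u1 = 0 /\ u2 = 0 /\ u3 = 0).
      by move=> [f1 [f2 f3]]; move: hu; rewrite f1 f2 f3 eqxx.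
    have [t1 t2 t3] := Tu e1 e2 e3.
    apply: (key _ _ _ hu' t1 t2 t3) => h1 h2 h3 ka kb kc.
    by have [? _] := ker_cross ka kb kc.
Qed.

End S.

Theorem lemma3p7 (R : rcfType) (phi : 'M[R[i]]_2) :
  in_sl2 phi ->
  (invertible_on_isu2 (Mphi phi) <-> comm_br phi (adjmx phi) != 0) /\
  (phi != 0 -> comm_br phi (adjmx phi) = 0 -> one_dim_kernel_isu2 (Mphi phi)).
Proof. move=> hsl; rewrite (decomp _ _ hsl); exact: main. Qed.
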